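(* Let $\Omega\subset\mathbb{C}^n$ be a bounded domain, let $\mathcal R$ and $\mathcal R'$ be quasi-free Hilbert modules of rank $m$, $1\le m<\infty$, over $A(\Omega)$ with generating sets $\{f_i\}_{i=1}^m$ and $\{g_i\}_{i=1}^m$, and let $\delta=\delta(\mathcal R,\mathcal R')$ with Hilbert space adjoint $\delta^*:\mathcal R'\to\mathcal R$. Then the domain of $\delta^*$ contains the finite linear span of $\{k'^i_z:z\in\Omega,1\le i\le m\}$, and for $z\in\Omega$ and $1\le i\le m$, \[\delta^*k'^i_z=\sum_j X_{ij}(z)\,k^j_z.\]
   Context: $A(\Omega)$ is the closure, in the supremum norm on $\Omega$, of the set of functions holomorphic on some neighbourhood of $\overline\Omega$; $\ell^2_m$ is the $m$-dimensional Hilbert space. A quasi-free Hilbert module of rank $m$ over $A(\Omega)$ is a Hilbert space $\mathcal R$ obtained as the completion of $A(\Omega)\otimes\ell^2_m$ (regarded as $\ell^2_m$-valued holomorphic functions on $\Omega$) with respect to an inner product such that: (1) for each $z\in\Omega$ evaluation at $z$ is bounded, with norm locally uniformly bounded in $z$; (2) $\|\varphi F\|_{\mathcal R}\le\|\varphi\|_{A(\Omega)}\|F\|_{\mathcal R}$; (3) if $(F_i)$ is Cauchy in $\mathcal R$-norm, then $F_i(z)\to0$ for all $z$ iff $\|F_i\|_{\mathcal R}\to0$. A generating set is $\{f_1,\dots,f_m\}\subset\mathcal R$ whose $A(\Omega)$-multiples span a dense subspace and such that its localizations at each $z$ form a basis (so $\{f_i(z)\}$ is a basis of $\ell^2_m$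 for each $z$). $\delta(\mathcal R,\mathcal R')$ is the closed, densely defined module transformation whose graph is the closure in $\mathcal R\oplus\mathcal R'$ of the span of $\{\varphi f_i\oplus\varphi g_i:\varphi\in A(\Omega),1\le i\le m\}$. The dual sets of kernel functions are the vectors $k^i_z\in\mathcal R$ and $k'^i_z\in\mathcal R'$ determined by $\langle k,k^i_z\rangle_{\mathcal R}=\langle k(z),f_i(z)\rangle_{\ell^2_m}$ for all $k\in\mathcal R$ and $\langle h,k'^i_z\rangle_{\mathcal R'}=\langle h(z),g_i(z)\rangle_{\ell^2_m}$ for all $h\in\mathcal R'$. For $z\in\Omega$, $(X_{ij}(z))_{i,j=1}^m$ is the matrix satisfying $\langle\sum_jX_{ij}(z)f_j(z),f_\ell(z)\rangle_{\ell^2_m}=\langle g_i(z),g_\ell(z)\rangle_{\ell^2_m}$ for $1\le i,\ell\le m$. *)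

(* Defs.v *)
From mathcomp Require Import all_boot all_algebra.
From mathcomp.real_closed Require Import complex.
From mathcomp Require Import reals.
Set Implicit Arguments. Unset Strict Implicit. Unset Printing Implicit Defensive.
Import GRing.Theory Num.Theory.
Local Open Scope ring_scope.

Section Defs.
Variables (R : realType) (n m : nat).
Local Notation C := R[i].
Local Notation pt := 'rV[C]_n.
(* l^2_m-valued functions on (a superset of) Omega *)
Local Notation fn := (pt -> 'rV[C]_m).

Definition sqn k (v : 'rV[C]_k) : C := \sum_i `|v 0 i| ^+ 2.
Definition dotl2 k (a b : 'rV[C]_k) : C := \sum_i a 0 i * (b 0 i)^*.

Definition openC (U : pt -> Prop) : Prop :=
  forall z, U z -> exists e : C, 0 < e /\ forall w, sqn (w - z) < e -> U w.
Definition closureC (Om : pt -> Prop) (w : pt) : Prop :=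
  forall e : C, 0 < e -> exists z, Om z /\ sqn (w - z) < e.
Definition connectedC (Om : pt -> Prop) : Prop :=
  forall A B : pt -> Prop, openC A -> openC B ->
    (forall z, Om z -> A z \/ B z) -> (forall z, Om z -> A z -> B z -> False) ->
    (forall z, Om z -> ~ A z) \/ (forall z, Om z -> ~ B z).
Definition boundedC (Om : pt -> Prop) : Prop :=
  exists M : C, forall z, Om z -> sqn z <= M.
Definition bounded_domain (Om : pt -> Prop) : Prop :=
  (exists z, Om z) /\ openC Om /\ connectedC Om /\ boundedC Om.

Definition holomorphic_on (U : pt -> Prop) (psi : pt -> C) : Prop :=
  forall z, U z -> exists a : pt, forall e : C, 0 < e -> exists d : C, 0 < d /\
    forall w, sqn (w - z) < d ->
      `|psi w - psi z - \sum_k a 0 k * (w 0 k - z 0 k)| ^+ 2 <= e * sqn (w - z).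

(* A(Omega): sup-norm (on Omega) closure of functions holomorphic on some
   neighbourhood of the closure of Omega *)
Definition inA (Om : pt -> Prop) (phi : pt -> C) : Prop :=
  forall e : C, 0 < e -> exists (U : pt -> Prop) (psi : pt -> C),
    openC U /\ (forall w, closureC Om w -> U w) /\ holomorphic_on U psi /\
    forall z, Om z -> `|phi z - psi z| ^+ 2 <= e.

(* A(Omega) (x) l^2_m, as l^2_m-valued functions *)
Definition in_tensor (Om : pt -> Prop) (F : fn) : Prop :=
  forall k, inA Om (fun z => F z 0 k).

Definition fsub (F G : fn) : fn := fun z => F z - G z.

Definition cauchy_seq (ip : fn -> fn -> C) (u : nat -> fn) : Prop :=
  forall e : C, 0 < e -> exists N, forall k l, (N <= k)%N -> (N <= l)%N ->
    ip (fsub (u k) (u l)) (fsub (u k) (u l)) < e.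

(* H is a Hilbert space of functions (identified when they agree on Omega) *)
Definition hilbert_space (Om : pt -> Prop) (H : fn -> Prop) (ip : fn -> fn -> C) : Prop :=
  H (fun _ => 0) /\
  (forall (a : C) F G, H F -> H G -> H (fun z => a *: F z + G z)) /\
  (forall F G, H F -> H G -> ip G F = (ip F G)^*) /\
  (forall (a : C) F G K, H F -> H G -> H K ->
     ip (fun z => a *: F z + G z) K = a * ip F K + ip G K) /\
  (forall F, H F -> 0 <= ip F F) /\
  (forall F, H F -> ip F F = 0 -> forall z, Om z -> F z = 0) /\
  (forall u : nat -> fn, (forall k, H (u k)) -> cauchy_seq ip u ->
     exists F, H F /\ forall e : C, 0 < e -> exists N, forall k, (N <= k)%N ->
       ip (fsub (u k) F) (fsub (u k) F) < e).

Definition quasi_free (Om : pt -> Prop) (H : fn -> Prop) (ip : fn -> fn -> C) : Prop :=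
  hilbert_space Om H ip /\
  (* completion of A(Omega) (x) l^2_m *)
  (forall F, in_tensor Om F -> H F) /\
  (forall F, H F -> forall e : C, 0 < e -> exists G, in_tensor Om G /\
     ip (fsub F G) (fsub F G) < e) /\
  (* (1) bounded evaluations, locally uniformly *)
  (forall z0, Om z0 -> exists r c : C, 0 < r /\ forall z, Om z -> sqn (z - z0) < r ->
     forall F, H F -> sqn (F z) <= c * ip F F) /\
  (* (2) contractive module action *)
  (forall phi, inA Om phi -> forall F, H F ->
     H (fun z => phi z *: F z) /\
     forall c : C, 0 <= c -> (forall z, Om z -> `|phi z| <= c) ->
       ip (fun z => phi z *: F z) (fun z => phi z *: F z) <= c ^+ 2 * ip F F) /\
  (forall u : nat -> fn, (forall k, in_tensor Om (u k)) -> cauchy_seq ip u ->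
     ((forall z, Om z -> forall e : C, 0 < e -> exists N, forall k, (N <= k)%N ->
          sqn (u k z) < e) <->
      (forall e : C, 0 < e -> exists N, forall k, (N <= k)%N -> ip (u k) (u k) < e))).

(* (x, y) lies in the linear span of {phi f_i (+) phi g_i : phi in A(Omega), i} *)
Definition modspan (Om : pt -> Prop) (f g : 'I_m -> fn) (x y : fn) : Prop :=
  exists N (c : 'I_N -> C) (phi : 'I_N -> pt -> C) (idx : 'I_N -> 'I_m),
    (forall k, inA Om (phi k)) /\
    x = (fun z => \sum_k (c k * phi k z) *: f (idx k) z) /\
    y = (fun z => \sum_k (c k * phi k z) *: g (idx k) z).

Definition locmx (f : 'I_m -> fn) (z : pt) : 'M[C]_m := \matrix_(i, j) f i z 0 j.

Definition generating_set (Om : pt -> Prop) (H : fn -> Prop) (ip : fn -> fn -> C)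
  (f : 'I_m -> fn) : Prop :=
  (forall i, H (f i)) /\
  (forall F, H F -> forall e : C, 0 < e -> exists G, modspan Om f f G G /\
     ip (fsub F G) (fsub F G) < e) /\
  (forall z, Om z -> row_free (locmx f z) && row_full (locmx f z)).

(* graph of delta(R, R'): closure in R (+) R' of the span above *)
Definition delta_graph (Om : pt -> Prop) (H H' : fn -> Prop) (ip ip' : fn -> fn -> C)
  (f g : 'I_m -> fn) (x y : fn) : Prop :=
  H x /\ H' y /\ forall e : C, 0 < e -> exists a b, modspan Om f g a b /\
    ip (fsub x a) (fsub x a) + ip' (fsub y b) (fsub y b) < e.

Definition kernel_functions (Om : pt -> Prop) (H : fn -> Prop) (ip : fn -> fn -> C)
  (f : 'I_m -> fn) (k : 'I_m -> pt -> fn) : Prop :=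
  forall i z, Om z -> H (k i z) /\ forall F, H F -> ip F (k i z) = dotl2 (F z) (f i z).

(* h is in dom(delta^* ) and delta^* h = y *)
Definition adjoint_value (Om : pt -> Prop) (H H' : fn -> Prop) (ip ip' : fn -> fn -> C)
  (f g : 'I_m -> fn) (h y : fn) : Prop :=
  H' h /\ H y /\ forall x u, delta_graph Om H H' ip ip' f g x u -> ip' u h = ip x y.

Definition in_adjoint_domain (Om : pt -> Prop) (H H' : fn -> Prop) (ip ip' : fn -> fn -> C)
  (f g : 'I_m -> fn) (h : fn) : Prop :=
  exists y, adjoint_value Om H H' ip ip' f g h y.

End Defs.

(* Main.v *)
Require Import Defs.
From mathcomp Require Import all_boot all_algebra.
From mathcomp.real_closed Require Import complex.
From mathcomp Require Import reals order.
Set Implicit Arguments. Unset Strict Implicit. Unset Printing Implicit Defensive.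
Import Order.POrderTheory GRing.Theory Num.Theory.
Local Open Scope ring_scope.
From Stdlib Require Import FunctionalExtensionality.
Section D.
Variables (R : realType).
Local Notation C := R[i].

Lemma dotl2_sum_l k N (d : 'I_N -> C) (v : 'I_N -> 'rV[C]_k) t :
  dotl2 (\sum_q d q *: v q) t = \sum_q d q * dotl2 (v q) t.
Proof.
rewrite /dotl2; under eq_bigr => i _ do rewrite summxE mulr_suml.
rewrite exchange_big; apply: eq_bigr => q _; rewrite mulr_sumr.
by apply: eq_bigr => i _; rewrite mxE mulrA.
Qed.

Lemma dotl2_conj k (a b : 'rV[C]_k) : dotl2 a b = (dotl2 b a)^*.
Proof.
rewrite /dotl2 rmorph_sum; apply: eq_bigr => i _.
by rewrite rmorphM /= conjCK mulrC.
Qed.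

Lemma dotl2_sum_r k N (d : 'I_N -> C) (v : 'I_N -> 'rV[C]_k) t :
  dotl2 t (\sum_q d q *: v q) = \sum_q (d q)^* * dotl2 t (v q).
Proof.
rewrite dotl2_conj dotl2_sum_l rmorph_sum; apply: eq_bigr => q _.
by rewrite rmorphM /= -dotl2_conj.
Qed.

Lemma dotl2B k (a b t : 'rV[C]_k) : dotl2 (a - b) t = dotl2 a t - dotl2 b t.
Proof.
by rewrite /dotl2 -sumrB; apply: eq_bigr => i _; rewrite !mxE mulrBl.
Qed.

Lemma coord_le k (v : 'rV[C]_k) i : `|v 0 i| ^+ 2 <= sqn v.
Proof.
rewrite /sqn (bigD1 i) //= lerDl sumr_ge0 // => j _.
exact: exprn_ge0.
Qed.

Lemma sqn_ge0 k (v : 'rV[C]_k) : 0 <= sqn v.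
Proof. by rewrite /sqn sumr_ge0 // => j _; exact: exprn_ge0. Qed.

Lemma aux (a b eta : C) : 0 <= a -> 0 < eta -> a ^+ 2 <= b -> a <= eta + b / eta.
Proof.
move=> a0 e0 ab.
have b0 : 0 <= b by apply: le_trans ab; exact: exprn_ge0.
have [ae|ea] := real_leP (ger0_real a0) (gtr0_real e0).
  by apply: le_trans ae _; rewrite lerDl divr_ge0 // ltW.
apply: (@le_trans _ _ (b / eta)); last by rewrite lerDr ltW.
rewrite ler_pdivlMr //; apply: le_trans ab.
by rewrite expr2 ler_wpM2l // ltW.
Qed.

Lemma dot_bound k (v t : 'rV[C]_k) eta : 0 < eta ->
  `|dotl2 v t| <= ((eta + sqn v / eta) * (1 + sqn t)) *+ k.
Proof.
move=> e0; rewrite /dotl2; apply: le_trans (ler_norm_sum _ _ _) _.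
rewrite -[X in _ *+ X]card_ord -sumr_const; apply: ler_sum => i _.
rewrite normrM norm_conjC; apply: ler_pM => //.
  by apply: aux => //; exact: coord_le.
by rewrite -[sqn t]divr1; apply: aux => //; exact: coord_le.
Qed.
End D.
Section Hlp.
Variables (R : realType) (n m : nat).
Local Notation C := R[i].
Local Notation pt := 'rV[C]_n.
Local Notation fn := (pt -> 'rV[C]_m).
Variables (Om : pt -> Prop) (H : fn -> Prop) (ip : fn -> fn -> C).
Hypothesis hs : hilbert_space Om H ip.

Lemma ip0l K : H K -> ip (fun _ => 0) K = 0.
Proof.
case: hs => [H0 [Hcl [Hsym [Hlin _]]]] HK.
have := Hlin (-1) (fun _ => 0) (fun _ => 0) K H0 H0 HK.
have -> : (fun z : pt => (-1) *: (0 : 'rV[C]_m) + 0) = (fun _ => 0).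
  by apply: functional_extensionality => z; rewrite scaler0 addr0.
by rewrite mulN1r addNr.
Qed.

Lemma hsum N (c : 'I_N -> C) (F : 'I_N -> fn) :
  (forall q, H (F q)) -> H (fun w => \sum_q c q *: F q w).
Proof.
case: hs => [H0 [Hcl _]].
elim: N c F => [|N IH] c F HF.
  have -> : (fun w => \sum_(q < 0) c q *: F q w) = (fun _ => 0).
    by apply: functional_extensionality => w; rewrite big_ord0.
  exact: H0.
have -> : (fun w => \sum_(q < N.+1) c q *: F q w) = (fun w => c ord_max *: F ord_max w +
   \sum_(q < N) c (widen_ord (leqnSn N) q) *: F (widen_ord (leqnSn N) q) w).
  by apply: functional_extensionality => w; rewrite big_ord_recr /= addrC.
apply: Hcl => //.
by apply: IH => q; exact: HF.
Qed.

Lemma ipsuml N (c : 'I_N -> C) (F : 'I_N -> fn) K :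
  (forall q, H (F q)) -> H K ->
  ip (fun w => \sum_q c q *: F q w) K = \sum_q c q * ip (F q) K.
Proof.
have hs' := hs; case: hs' => [H0 [Hcl [Hsym [Hlin _]]]].
elim: N c F => [|N IH] c F HF HK.
  have -> : (fun w => \sum_(q < 0) c q *: F q w) = (fun _ => 0).
    by apply: functional_extensionality => w; rewrite big_ord0.
  by rewrite ip0l // big_ord0.
have -> : (fun w => \sum_(q < N.+1) c q *: F q w) = (fun w => c ord_max *: F ord_max w +
   \sum_(q < N) c (widen_ord (leqnSn N) q) *: F (widen_ord (leqnSn N) q) w).
  by apply: functional_extensionality => w; rewrite big_ord_recr /= addrC.
rewrite Hlin //; last first.
  by apply: hsum => q; exact: HF.
rewrite IH //.
by rewrite [in RHS]big_ord_recr /= addrC.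
Qed.

Lemma ipsumr N (c : 'I_N -> C) (F : 'I_N -> fn) K :
  (forall q, H (F q)) -> H K ->
  ip K (fun w => \sum_q c q *: F q w) = \sum_q (c q)^* * ip K (F q).
Proof.
have hs' := hs; case: hs' => [H0 [Hcl [Hsym [Hlin _]]]] HF HK.
rewrite Hsym //; last exact: hsum.
rewrite ipsuml // rmorph_sum; apply: eq_bigr => q _.
by rewrite rmorphM /= -Hsym.
Qed.

End Hlp.

Section Q.
Variables (R : realType) (n m : nat).
Local Notation C := R[i].
Local Notation pt := 'rV[C]_n.
Local Notation fn := (pt -> 'rV[C]_m).

Lemma Hsub (Om : pt -> Prop) H ip (x a : fn) : hilbert_space Om H ip -> H x -> H a -> H (fsub x a).
Proof.
case=> [_ [Hcl _]] Hx Ha.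
have -> : fsub x a = (fun z => (-1) *: a z + x z).
  by apply: functional_extensionality => z; rewrite scaleN1r addrC.
exact: Hcl.
Qed.

Lemma modspan_H (Om : pt -> Prop) H ip (f : 'I_m -> fn) N (c : 'I_N -> C) phi (idx : 'I_N -> 'I_m) :
  quasi_free Om H ip -> (forall i, H (f i)) -> (forall k, inA Om (phi k)) ->
  H (fun z => \sum_k (c k * phi k z) *: f (idx k) z).
Proof.
case=> [hs [_ [_ [_ [modact _]]]]] Hf Hphi.
have -> : (fun z => \sum_k (c k * phi k z) *: f (idx k) z) =
  (fun z => \sum_k c k *: (fun z => phi k z *: f (idx k) z) z).
  apply: functional_extensionality => z; apply: eq_bigr => k _.
  by rewrite scalerA.
apply: (hsum hs) => q.
exact: (modact (phi q) (Hphi q) (f (idx q)) (Hf _)).1.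
Qed.

Lemma adj_lin (Om : pt -> Prop) H H' ip ip' (f g : 'I_m -> fn) N (c : 'I_N -> C)
  (hq yq : 'I_N -> fn) :
  hilbert_space Om H ip -> hilbert_space Om H' ip' ->
  (forall q, adjoint_value Om H H' ip ip' f g (hq q) (yq q)) ->
  adjoint_value Om H H' ip ip' f g (fun w => \sum_q c q *: hq q w)
     (fun w => \sum_q c q *: yq q w).
Proof.
move=> hs hs' A.
split; first by apply: (hsum hs') => q; case: (A q).
split; first by apply: (hsum hs) => q; case: (A q) => _ [].
move=> x u G; have [Hx [Hu _]] := G.
rewrite (ipsumr hs'); last by []; last by move=> q; case: (A q).
rewrite (ipsumr hs); last by []; last by move=> q; case: (A q) => _ [].
apply: eq_bigr => q _; congr (_ * _).
by case: (A q) => _ [_ ]; apply.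
Qed.

Lemma sq_small (s c p e : C) : 0 <= s -> s <= c * p -> 0 <= p -> p <= e -> s <= `|c| * e.
Proof.
move=> s0 scp p0 pe.
have cp0 : 0 <= c * p by apply: le_trans scp.
apply: le_trans scp _; rewrite -(ger0_norm cp0) normrM (ger0_norm p0).
by rewrite ler_wpM2l.
Qed.

Lemma D_small k (v1 v2 g0 w : 'rV[C]_k) eta : 0 < eta ->
  sqn v1 <= eta * eta -> sqn v2 <= eta * eta ->
  `|dotl2 v1 g0 - dotl2 v2 w| <= eta * ((((1 + sqn g0) + (1 + sqn w)) *+ k) *+ 2).
Proof.
move=> e0 s1 s2.
apply: le_trans (ler_normB _ _) _.
have h1 s : s <= eta * eta -> eta + s / eta <= eta *+ 2.
  by move=> hs; rewrite mulr2n lerD2l ler_pdivrMr.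
have a0 t : 0 <= 1 + sqn t :> C by rewrite addr_ge0 // sqn_ge0.
apply: le_trans (lerD (dot_bound v1 g0 e0) (dot_bound v2 w e0)) _.
have -> : eta * ((((1 + sqn g0) + (1 + sqn w)) *+ k) *+ 2) =
   ((eta *+ 2) * (1 + sqn g0)) *+ k + ((eta *+ 2) * (1 + sqn w)) *+ k.
  by rewrite -mulrnDl -mulrDr !mulrnAr mulrnAC mulrnAl.
apply: lerD; rewrite lerMn2r ?ler_wpM2r ?h1 ?a0 ?orbT //.
Qed.

Lemma norm_small0 (x : C) : (forall e, 0 < e -> `|x| <= e) -> x = 0.
Proof.
move=> h; apply/eqP; apply: contraT => nz.
have p : 0 < `|x| by rewrite normr_gt0.
have := h (`|x| / 2%:R) (divr_gt0 p (ltr0Sn _ _)).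
by rewrite ler_pdivlMr ?ltr0Sn // mulr_natr mulr2n gerDl (lt_geF p).
Qed.

End Q.

Lemma frac_le (R : realType) (t E K : R[i]) : 0 <= t -> 0 <= E -> 0 < K -> t <= K -> t * (E / K) <= E.
Proof.
move=> t0 E0 K0 tK.
by rewrite mulrA ler_pdivrMr // mulrC ler_wpM2l.
Qed.

Unset Implicit Arguments.

Theorem lemma3 (R : realType) (n m : nat) (Om : 'rV[R[i]]_n -> Prop)
  (H H' : ('rV[R[i]]_n -> 'rV[R[i]]_m) -> Prop)
  (ip ip' : ('rV[R[i]]_n -> 'rV[R[i]]_m) -> ('rV[R[i]]_n -> 'rV[R[i]]_m) -> R[i])
  (f g : 'I_m -> 'rV[R[i]]_n -> 'rV[R[i]]_m)
  (k k' : 'I_m -> 'rV[R[i]]_n -> 'rV[R[i]]_n -> 'rV[R[i]]_m)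
  (X : 'rV[R[i]]_n -> 'M[R[i]]_m) :
  (0 < m)%N ->
  bounded_domain Om ->
  quasi_free Om H ip -> quasi_free Om H' ip' ->
  generating_set Om H ip f -> generating_set Om H' ip' g ->
  kernel_functions Om H ip f k -> kernel_functions Om H' ip' g k' ->
  (forall z, Om z -> forall i l : 'I_m,
     dotl2 (\sum_j X z i j *: f j z) (f l z) = dotl2 (g i z) (g l z)) ->
  (forall (N : nat) (c : 'I_N -> R[i]) (zs : 'I_N -> 'rV[R[i]]_n) (idx : 'I_N -> 'I_m),
     (forall q, Om (zs q)) ->
     in_adjoint_domain Om H H' ip ip' f g
       (fun w => \sum_q c q *: k' (idx q) (zs q) w)) /\
  (forall z (i : 'I_m), Om z ->
     adjoint_value Om H H' ip ip' f g (k' i z) (fun w => \sum_j X z i j *: k j z w)).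
Proof.
move=> m0 bd qf qf' gs gs' kf kf' hX.
have hs := proj1 qf; have hs' := proj1 qf'.
have Hf := proj1 gs; have Hg := proj1 gs'.
have P2 : forall z (i : 'I_m), Om z ->
     adjoint_value Om H H' ip ip' f g (k' i z) (fun w => \sum_j X z i j *: k j z w).
  move=> z i Oz.
  split; first exact: (kf' i z Oz).1.
  split; first by apply: (hsum hs) => j; exact: (kf j z Oz).1.
  move=> x u G; have [Hx [Hu Happ]] := G.
  rewrite (kf' i z Oz).2 // (ipsumr hs) //; last by move=> j; exact: (kf j z Oz).1.
  under eq_bigr => j _ do rewrite (kf j z Oz).2 //.
  rewrite -dotl2_sum_r.
  set w := \sum_j X z i j *: f j z.
  apply/eqP; rewrite -subr_eq0; apply/eqP; apply: norm_small0 => eps eps0.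
  case: (qf) => [_ [_ [_ [ev _]]]]; case: (ev z Oz) => r [c [r0 evb]].
  case: (qf') => [_ [_ [_ [ev' _]]]]; case: (ev' z Oz) => r' [c' [r0' evb']].
  have zz0 : sqn (z - z) = 0 by rewrite subrr /sqn big1 // => j _; rewrite mxE normr0 expr0n.
  have zz : sqn (z - z) < r by rewrite zz0.
  have zz' : sqn (z - z) < r' by rewrite zz0.
  set M := (((1 + sqn (g i z)) + (1 + sqn w)) *+ m) *+ 2.
  have M0 : 0 < M.
    by rewrite /M pmulrn_lgt0 // pmulrn_lgt0 // addr_gt0 // ltr_wpDr ?sqn_ge0 ?ltr01.
  set eta := eps / M.
  have eta0 : 0 < eta by rewrite divr_gt0.
  set K := `|c| + `|c'| + 1.
  have K0 : 0 < K by rewrite /K ltr_wpDl ?addr_ge0 ?ltr01.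
  have E0 : 0 < eta * eta / K by rewrite divr_gt0 // mulr_gt0.
  have [a [b [ms hlt]]] := Happ _ E0.
  case: (ms) => N [cc [phi [idx [Hphi [ea eb]]]]].
  have Ha : H a by rewrite ea; exact: modspan_H qf Hf Hphi.
  have Hb : H' b by rewrite eb; exact: modspan_H qf' Hg Hphi.
  have key : dotl2 (b z) (g i z) = dotl2 (a z) w.
    rewrite ea eb /= dotl2_sum_l [RHS]dotl2_sum_l; apply: eq_bigr => q _; congr (_ * _).
    by rewrite [RHS]dotl2_conj /w hX // -dotl2_conj.
  have Hxa := Hsub hs Hx Ha; have Hub := Hsub hs' Hu Hb.
  have p1 : 0 <= ip (fsub x a) (fsub x a) by case: hs => [_ [_ [_ [_ [Hpos _]]]]]; exact: Hpos.
  have p2 : 0 <= ip' (fsub u b) (fsub u b) by case: hs' => [_ [_ [_ [_ [Hpos _]]]]]; exact: Hpos.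
  have le1 : ip (fsub x a) (fsub x a) <= eta * eta / K.
    by apply: ltW; apply: le_lt_trans hlt; rewrite lerDl.
  have le2 : ip' (fsub u b) (fsub u b) <= eta * eta / K.
    by apply: ltW; apply: le_lt_trans hlt; rewrite lerDr.
  have s1 : sqn (fsub x a z) <= eta * eta.
    apply: le_trans (sq_small (sqn_ge0 _) (evb z Oz zz _ Hxa) p1 le1) _.
    apply: frac_le => //; first by rewrite mulr_ge0 // ltW.
    by rewrite /K -addrA lerDl addr_ge0.
  have s2 : sqn (fsub u b z) <= eta * eta.
    apply: le_trans (sq_small (sqn_ge0 _) (evb' z Oz zz' _ Hub) p2 le2) _.
    apply: frac_le => //; first by rewrite mulr_ge0 // ltW.
    by rewrite /K addrAC lerDr addr_ge0.
  have -> : dotl2 (u z) (g i z) - dotl2 (x z) w =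
      dotl2 (fsub u b z) (g i z) - dotl2 (fsub x a z) w.
    by rewrite /fsub !dotl2B key opprB addrA subrK.
  apply: le_trans (D_small (g i z) w eta0 s2 s1) _.
  by rewrite -/M /eta divfK // gt_eqF.
split=> // N c zs idx Hz.
exists (fun w => \sum_q c q *: (fun w => \sum_j X (zs q) (idx q) j *: k j (zs q) w) w).
apply: adj_lin hs hs' _ => q; exact: P2.
Qed.
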